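(* For $j\in\mathbb{Z}$ let $R_j(t,u)$ be the generating function of labelled plane trees, where $t$ counts edges and $u$ counts nodes with label at least $j$. The family $R_0,R_1,R_2,\dots$ is completely determined by the equations $$R_j=1+tR_j(R_{j-1}+R_{j+1})\quad(j\ge1),\qquad R_0(t,u)=uR_1(tu,1/u).$$ More generally, for all $j\in\mathbb{Z}$, $R_{-j}(t,u)=uR_{j+1}(tu,1/u)$.
   Context: A labelled plane tree is a rooted plane tree whose nodes carry integer labels, with the root labelled $0$ and labels of adjacent nodes differing by $+1$ or $-1$. Generating functions are formal power series in $t$ with coefficients polynomial in $u$. *)

(* Defs.v *)
From HB Require Import structures.
From mathcomp Require Import all_boot all_order all_algebra.
From Stdlib Require List.
Set Implicit Arguments. Unset Strict Implicit. Unset Printing Implicit Defensive.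
Import Order.TTheory GRing.Theory Num.Theory.
Local Open Scope ring_scope.

Inductive ltree : Type := LNode : int -> seq ltree -> ltree.

Definition label (T : ltree) : int := let: LNode m _ := T in m.

Fixpoint labels_ok (T : ltree) : bool :=
  let: LNode m ts := T in
  all (fun c => (label c == m + 1) || (label c == m - 1)) ts && all labels_ok ts.

Definition labelled_tree (T : ltree) : bool := (label T == 0) && labels_ok T.

Fixpoint edges (T : ltree) : nat :=
  let: LNode _ ts := T in (size ts + sumn (map edges ts))%N.

Fixpoint count_ge (j : int) (T : ltree) : nat :=
  let: LNode m ts := T in (((j <= m)%R : nat) + sumn (map (count_ge j) ts))%N.

(* Formal power series in t with coefficients polynomials in u:
   F : nat -> {poly rat}, F n = coefficient of t^n (a polynomial in u = 'X). *)
Definition series := nat -> {poly rat}.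

Definition sone : series := fun n => (n == 0%N)%:R.
Definition sadd (F G : series) : series := fun n => F n + G n.
Definition smul (F G : series) : series :=
  fun n => \sum_(i < n.+1) F i * G (n - i)%N.
Definition st (F : series) : series :=
  fun n => if n is m.+1 then F m else 0.

Definition is_gf_R (j : int) (F : series) : Prop :=
  forall n : nat, exists s : seq ltree,
    List.NoDup s /\
    (forall T, List.In T s <-> (labelled_tree T /\ edges T = n)) /\
    F n = \sum_(T <- s) 'X^(count_ge j T).

(* F(t,u) = u * G(t u, 1/u), coefficientwise: the coefficient of t^n of the
   right side is u^(n+1) * G_n(1/u); identity of rational functions in u,
   checked at every nonzero rational u. *)
Definition subst_rel (F G : series) : Prop :=
  forall (n : nat) (x : rat), x != 0 ->
    (F n).[x] = x ^+ n.+1 * (G n).[x^-1].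

(* Main.v *)
Require Import Defs.
From HB Require Import structures.
From mathcomp Require Import all_boot all_order all_algebra.
From Stdlib Require List.
From mathcomp Require Import zify.
From Stdlib Require Import IndefiniteDescription.
Import Order.TTheory GRing.Theory Num.Theory.
Local Open Scope ring_scope.

Fixpoint ltree_ind' (P : ltree -> Prop)
  (f : forall m ts, List.Forall P ts -> P (LNode m ts)) (T : ltree) : P T :=
  match T with
  | LNode m ts => f m ts ((fix G (ts : seq ltree) : List.Forall P ts :=
        match ts with
        | nil => List.Forall_nil _
        | t :: ts' => List.Forall_cons t (ltree_ind' P f t) (G ts')
        end) ts)
  end.

Set Implicit Arguments. Unset Strict Implicit. Unset Printing Implicit Defensive.

Fixpoint ltree_eqb (a b : ltree) : bool :=
  let: LNode m ts := a in let: LNode m' ts' := b in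
  (m == m') && all2 ltree_eqb ts ts'.

Lemma ltree_eqb_refl a : ltree_eqb a a.
Proof.
elim/ltree_ind': a => m ts H /=; rewrite eqxx /=.
elim: H => //= t ts' -> _ ->. by [].
Qed.

Lemma ltree_eqb_eq a b : ltree_eqb a b -> a = b.
Proof.
elim/ltree_ind': a b => m ts H [m' ts'] /= /andP[/eqP <-].
elim: H ts' => [|t ts1 Ht _ IH] [|t' ts2] //= /andP[/Ht -> /IH [->]] //.
Qed.

Lemma ltree_eqP : Equality.axiom ltree_eqb.
Proof.
move=> a b; apply: (iffP idP); first exact: ltree_eqb_eq.
by move=> ->; apply: ltree_eqb_refl.
Qed.

HB.instance Definition _ := hasDecEq.Build ltree ltree_eqP.

Lemma InP (T : eqType) (x : T) s : List.In x s <-> x \in s.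
Proof.
elim: s => [|y s IH] //=; rewrite in_cons; split.
- by case=> [->|/IH ->]; rewrite ?eqxx ?orbT.
- by case/orP=> [/eqP ->|/IH]; [left|right].
Qed.

Lemma NoDup_uniq (T : eqType) (s : seq T) : List.NoDup s -> uniq s.
Proof.
elim=> //= x l Hn _ ->; rewrite andbT; apply/negP => /InP //.
Qed.

Lemma ltree_ind2 (P : ltree -> Prop)
  (f : forall m ts, (forall t, t \in ts -> P t) -> P (LNode m ts)) T : P T.
Proof.
elim/ltree_ind': T => m ts H; apply: f => t /InP.
by move: t; apply/List.Forall_forall.
Qed.

Fixpoint shift (d : int) (T : ltree) : ltree :=
  let: LNode m ts := T in LNode (m + d) (map (shift d) ts).

Fixpoint negt (T : ltree) : ltree :=
  let: LNode m ts := T in LNode (- m) (map negt ts).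

Definition graft (c r : ltree) : ltree :=
  let: LNode m ts := r in LNode m (c :: ts).

Lemma label_shift d T : label (shift d T) = label T + d.
Proof. by case: T. Qed.

Lemma shiftK d T : shift (- d) (shift d T) = T.
Proof.
elim/ltree_ind2: T => m ts IH /=; rewrite addrK -map_comp.
by congr LNode; rewrite -[RHS]map_id; apply/eq_in_map => t /IH.
Qed.

Lemma shift_inj d : injective (shift d).
Proof. exact: can_inj (shiftK d). Qed.

Lemma labels_ok_shift d T : labels_ok (shift d T) = labels_ok T.
Proof.
elim/ltree_ind2: T => m ts IH /=; rewrite all_map.
congr andb.
  by apply: eq_all => c /=; rewrite label_shift ![m + d + _]addrAC !(inj_eq (addIr d)).
rewrite all_map; apply: eq_in_all => c /IH //.
Qed.

Lemma edges_shift d T : edges (shift d T) = edges T.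
Proof.
elim/ltree_ind2: T => m ts IH /=; rewrite size_map -map_comp.
by congr (_ + _)%N; congr sumn; apply/eq_in_map => t /IH.
Qed.

Lemma count_shift j d T : count_ge j (shift d T) = count_ge (j - d) T.
Proof.
elim/ltree_ind2: T => m ts IH /=; rewrite -map_comp lerBlDr.
by congr (_ + _)%N; congr sumn; apply/eq_in_map => t /IH.
Qed.

Lemma label_negt T : label (negt T) = - label T.
Proof. by case: T. Qed.

Lemma negtK T : negt (negt T) = T.
Proof.
elim/ltree_ind2: T => m ts IH /=; rewrite opprK -map_comp.
by congr LNode; rewrite -[RHS]map_id; apply/eq_in_map => t /IH.
Qed.

Lemma negt_inj : injective negt.
Proof. exact: can_inj negtK. Qed.

Lemma labels_ok_negt T : labels_ok (negt T) = labels_ok T.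
Proof.
elim/ltree_ind2: T => m ts IH /=; rewrite !all_map.
congr andb; last by apply: eq_in_all => c /IH.
apply: eq_all => c /=; rewrite label_negt.
have -> : - m + 1 = - (m - 1) by rewrite opprB addrC.
have -> : - m - 1 = - (m + 1) by rewrite opprD.
by rewrite !eqr_opp orbC.
Qed.

Lemma edges_negt T : edges (negt T) = edges T.
Proof.
elim/ltree_ind2: T => m ts IH /=; rewrite size_map -map_comp.
by congr (_ + _)%N; congr sumn; apply/eq_in_map => t /IH.
Qed.

Lemma count_negt j T :
  (count_ge (- j) (negt T) + count_ge (j + 1) T = (edges T).+1)%N.
Proof.
elim/ltree_ind2: T => m ts IH /=.
have Hb : (((- j <= - m)%R : nat) + ((j + 1 <= m)%R : nat) = 1)%N.
  rewrite lerN2 -ltzD1; by case: lerP.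
have Hs : (sumn (map (count_ge (-j)) (map negt ts)) + sumn (map (count_ge (j+1)) ts)
   = size ts + sumn (map edges ts))%N.
  elim: ts IH {Hb} => //= t ts IHts IH.
  have h1 := IH t (mem_head _ _).
  have h2 := IHts (fun u Hu => IH u (@mem_behead _ (t :: ts) u Hu)).
  by rewrite addnACA h1 h2 !addSn addnCA.
by rewrite addnACA Hb Hs add1n.
Qed.

Lemma graft_labelled c r : labelled_tree r -> labels_ok c ->
  (label c == 1) || (label c == -1) -> labelled_tree (graft c r).
Proof.
case: r => m ts; rewrite /labelled_tree /= => /andP[/eqP -> /andP[H1 H2]] Hc Hl.
rewrite /= add0r sub0r Hl H1 Hc H2 //.
Qed.

Lemma edges_graft c r : edges (graft c r) = (edges c + edges r).+1.
Proof. case: r => m ts /=; rewrite addSn; congr S; rewrite addnCA //. Qed.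

Lemma count_graft j c r : count_ge j (graft c r) = (count_ge j c + count_ge j r)%N.
Proof. case: r => m ts /=; rewrite addnCA //. Qed.

Definition Pl (s : nat -> seq ltree) (m : nat) : seq (ltree * ltree) :=
  [seq rc | i <- iota 0 m.+1, rc <- [seq (r, c) | r <- s i, c <- s (m - i)%N]].

Definition Ll (s : nat -> seq ltree) (m : nat) (d : int) : seq ltree :=
  [seq graft (shift d rc.2) rc.1 | rc <- Pl s m].

Definition LL s m := Ll s m 1 ++ Ll s m (-1).

Definition firstlabel (T : ltree) : int :=
  match T with LNode _ (c :: _) => label c | _ => 0 end.

Lemma firstlabel_graft c r : firstlabel (graft c r) = label c.
Proof. by case: r. Qed.

Lemma graft_inj c r c' r' : graft c r = graft c' r' -> c = c' /\ r = r'.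
Proof. by case: r => m ts; case: r' => m' ts' /= [-> -> ->]. Qed.

Definition good (s : nat -> seq ltree) :=
  forall n, uniq (s n) /\ forall T, (T \in s n) = labelled_tree T && (edges T == n).

Lemma memP s (hs : good s) n T : T \in s n -> [/\ label T = 0, labels_ok T & edges T = n].
Proof. by rewrite (proj2 (hs n)) => /andP[/andP[/eqP -> ->] /eqP ->]. Qed.

Lemma memPl s (hs : good s) m rc : rc \in Pl s m ->
  [/\ rc.1 \in s (edges rc.1), rc.2 \in s (m - edges rc.1)%N & (edges rc.1 <= m)%N].
Proof.
case/allpairsPdep => i [[r c] [Hi /allpairsP [[r' c'] /= [Hr Hc [-> ->]]] ->]] /=.
have [_ _ Er] := memP hs Hr.
by rewrite Er Hr Hc; move: Hi; rewrite mem_iota /= add0n ltnS.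
Qed.

Lemma uniq_Pl s (hs : good s) m : uniq (Pl s m).
Proof.
apply: allpairs_uniq_dep; first exact: iota_uniq.
  move=> i _; apply: allpairs_uniq; try exact: (proj1 (hs _)).
  by move=> [a b] [a' b'] _ _ /= [-> ->].
move=> p1 p2 /allpairsPdep [i1 [y1 [_ H1 ->]]] /allpairsPdep [i2 [y2 [_ H2 ->]]] /= E.
subst y2.
case/allpairsP: H1 => [[r c] /= [Hr _ E1]].
case/allpairsP: H2 => [[r' c'] /= [Hr' _ E2]].
have [_ _ e1] := memP hs Hr. have [_ _ e2] := memP hs Hr'.
have err : r = r' by rewrite E1 in E2; case: E2.
have ei : i1 = edges r' by rewrite -e1 err.
by rewrite ei e2.
Qed.

Lemma uniq_LL s (hs : good s) m : uniq (LL s m).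
Proof.
have inj d : injective (fun rc : ltree * ltree => graft (shift d rc.2) rc.1).
  move=> [r c] [r' c'] /= /graft_inj [/shift_inj -> ->] //.
rewrite cat_uniq !map_inj_uniq ?uniq_Pl //= andbT /Ll.
apply/hasPn => T /mapP [[r c] /(memPl hs) /= [_ Hc _] ->].
apply/negP => /mapP [[r' c'] /(memPl hs) /= [_ Hc' _] E].
have := congr1 firstlabel E; rewrite !firstlabel_graft !label_shift.
by have [-> _ _] := memP hs Hc; have [-> _ _] := memP hs Hc'.
Qed.

Lemma mem_LL s (hs : good s) m T :
  (T \in LL s m) = labelled_tree T && (edges T == m.+1).
Proof.
apply/idP/idP.
  rewrite mem_cat => /orP [] /mapP [[r c] /(memPl hs) /= [Hr Hc Hle] ->].
  - have [lr okr er] := memP hs Hr; have [lc okc ec] := memP hs Hc.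
    rewrite graft_labelled ?labels_ok_shift ?label_shift ?lc ?add0r ?eqxx //=;
      last by rewrite /labelled_tree lr eqxx okr.
    by rewrite edges_graft edges_shift ec subnK.
  - have [lr okr er] := memP hs Hr; have [lc okc ec] := memP hs Hc.
    rewrite graft_labelled ?labels_ok_shift ?label_shift ?lc ?add0r ?eqxx ?orbT //=;
      last by rewrite /labelled_tree lr eqxx okr.
    by rewrite edges_graft edges_shift ec subnK.
case: T => m0 [|c ts]; rewrite /labelled_tree /=.
  by rewrite andbC.
case/andP => /andP [/eqP e0 /andP [/andP [Hl Hall] /andP [okc okts]]] Em.
subst m0; move/eqP: Em => Em.
set r := LNode 0 ts.
have okr : labelled_tree r by rewrite /labelled_tree /r /= Hall okts.
have Er : edges (LNode 0 (c :: ts)) = (edges c + edges r).+1 by rewrite -edges_graft.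
set d := label c.
set c0 := shift (- d) c.
have Ec : c = shift d c0 by rewrite /c0 -{1}(shiftK (- d) c) opprK.
have okc0 : labelled_tree c0 by rewrite /labelled_tree label_shift subrr eqxx labels_ok_shift okc.
have Hm : (edges c + edges r = m)%N by move: Em; rewrite addSn => [[]]; rewrite addnCA.
have inP : (r, c0) \in Pl s m.
  apply/allpairsPdep; exists (edges r), (r, c0); split => //.
    by rewrite mem_iota add0n ltnS -Hm leq_addl.
  apply/allpairsP; exists (r, c0); split => //=.
    by rewrite (proj2 (hs _)) okr eqxx.
  by rewrite (proj2 (hs _)) okc0 /c0 edges_shift -Hm addnK eqxx.
have -> : LNode 0 (c :: ts) = graft (shift d c0) r by rewrite -Ec.
rewrite mem_cat; case/orP: Hl => /eqP Hd; rewrite -/d in Hd; rewrite Hd.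
  by rewrite (map_f (fun rc : ltree * ltree => graft (shift 1 rc.2) rc.1) inP).
by rewrite (map_f (fun rc : ltree * ltree => graft (shift (-1) rc.2) rc.1) inP) orbT.
Qed.

Lemma ltree_eqE (a b : ltree) : (a == b) = ltree_eqb a b.
Proof. by []. Qed.

Definition Wsum (s : nat -> seq ltree) (j : int) (n : nat) : {poly rat} :=
  \sum_(T <- s n) 'X^(count_ge j T).

Lemma W_rec s (hs : good s) j m :
  Wsum s j m.+1 = \sum_(i < m.+1) Wsum s j i * (Wsum s (j - 1) (m - i)%N + Wsum s (j + 1) (m - i)%N).
Proof.
have P : perm_eq (s m.+1) (LL s m).
  apply: uniq_perm; [exact: (proj1 (hs _)) | exact: uniq_LL | ].
  by move=> T; rewrite mem_LL // (proj2 (hs _)).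
rewrite /Wsum (perm_big _ P) big_cat !big_map /Pl !big_allpairs_dep.
have -> : iota 0 m.+1 = index_iota 0 m.+1 by rewrite /index_iota subn0.
rewrite !big_mkord.
under [RHS]eq_bigr do rewrite mulrDr.
rewrite big_split /=.
congr (_ + _); apply: eq_bigr => i _; rewrite mulr_suml big_allpairs_dep; apply: eq_bigr => r _;
  rewrite mulr_sumr; apply: eq_bigr => c _ /=; rewrite count_graft count_shift exprD mulrC //.
Qed.

Lemma W_0 s (hs : good s) j : Wsum s j 0%N = 'X^((j <= 0)%R : nat).
Proof.
have P : perm_eq (s 0%N) [:: LNode 0 [::]].
  apply: uniq_perm; [exact: (proj1 (hs _)) | by [] | ].
  move=> T; rewrite (proj2 (hs _)) in_cons in_nil orbF.
  case: T => m0 [|c ts]; rewrite /labelled_tree /=; rewrite [RHS]ltree_eqE /=.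
    by rewrite addn0 eqxx andbT.
  by rewrite andbF; apply/negbTE/nandP; right; apply/negP => /eqP; lia.
by rewrite /Wsum (perm_big _ P) big_cons big_nil /= [_ + 0]addr0 addn0.
Qed.

Lemma W_sym s (hs : good s) j n (x : rat) : x != 0 ->
  (Wsum s (- j) n).[x] = x ^+ n.+1 * (Wsum s (j + 1) n).[x^-1].
Proof.
move=> x0.
have P : perm_eq (s n) (map negt (s n)).
  apply: uniq_perm; [exact: (proj1 (hs _)) | by rewrite map_inj_uniq ?(proj1 (hs _)) //; exact: negt_inj | ].
  move=> T; rewrite -{2}(negtK T) (mem_map negt_inj) !(proj2 (hs _)).
  by rewrite /labelled_tree label_negt oppr_eq0 labels_ok_negt edges_negt.
rewrite /Wsum (perm_big _ P) big_map !horner_sum mulr_sumr.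
apply: eq_big_seq => T HT.
have [_ _ eT] := memP hs HT.
rewrite !hornerXn -eT -(count_negt j T) exprD -mulrA exprVn mulfV ?mulr1 //.
exact: expf_neq0.
Qed.

Lemma poly_eq_nz (p q : {poly rat}) :
  (forall x : rat, x != 0 -> p.[x] = q.[x]) -> p = q.
Proof.
move=> H; apply/eqP; rewrite -subr_eq0; apply/negPn/negP => nz.
suff : (size [seq (i.+1)%:R : rat | i <- iota 0 (size (p - q)%R)] < size (p - q)%R)%N.
  by rewrite size_map size_iota ltnn.
apply: (max_poly_roots nz).
  apply/allP => x /mapP [i _ ->]; rewrite /root hornerD hornerN H ?subrr //.
  by rewrite pnatr_eq0.
rewrite map_inj_uniq ?iota_uniq // => a b /eqP; rewrite eqr_nat => /eqP [] //.
Qed.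

Lemma mem_of (s : seq ltree) n :
  (forall T, List.In T s <-> labelled_tree T /\ edges T = n) ->
  forall T, (T \in s) = labelled_tree T && (edges T == n).
Proof.
move=> H T; apply/idP/andP.
  by move/InP/H => [-> ->].
by move=> [a /eqP b]; apply/InP/H.
Qed.

Lemma Rgood (R : int -> series) (hR : forall j : int, is_gf_R j (R j)) :
  exists s, good s /\ forall j n, R j n = Wsum s j n.
Proof.
pose P n (s : seq ltree) := List.NoDup s /\ (forall T, List.In T s <-> labelled_tree T /\ edges T = n).
have H n : {s | P n s}.
  apply: constructive_indefinite_description.
  by case: (hR 0 n) => s [h1 [h2 _]]; exists s.
exists (fun n => sval (H n)); split.
  move=> n; case: (H n) => s [h1 h2] /=; split; first exact: NoDup_uniq.
  exact: mem_of.
move=> j n; case: (hR j n) => s' [h1 [h2 ->]].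
rewrite /Wsum; apply: perm_big; apply: uniq_perm; first exact: NoDup_uniq.
  by case: (H n) => s [h3 h4] /=; exact: NoDup_uniq.
case: (H n) => s [h3 h4] /= T; by rewrite (mem_of h2) (mem_of h4).
Qed.

Theorem lemma6 (R : int -> series) (hR : forall j : int, is_gf_R j (R j)) :
  (* R_0, R_1, ... satisfy the equations *)
  ((forall j : nat, (1 <= j)%N -> forall n : nat,
      R j n = sadd sone (st (smul (R j) (sadd (R (j%:Z - 1)) (R (j%:Z + 1))))) n)
   /\ subst_rel (R 0) (R 1))
  (* ... and they determine the family completely *)
  /\ (forall S : nat -> series,
        (forall j : nat, (1 <= j)%N -> forall n : nat,
           S j n = sadd sone (st (smul (S j) (sadd (S j.-1) (S j.+1)))) n) ->
        subst_rel (S 0%N) (S 1%N) ->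
        forall (j n : nat), S j n = R j n)
  (* general symmetry *)
  /\ (forall j : int, subst_rel (R (- j)) (R (j + 1))).
Proof.
have [s [hs HR]] := Rgood hR.
have sym : forall j : int, subst_rel (R (- j)) (R (j + 1)).
  by move=> j n x x0; rewrite !HR; apply: W_sym.
have rec : forall j : nat, (1 <= j)%N -> forall n : nat,
      R j n = sadd sone (st (smul (R j) (sadd (R (j%:Z - 1)) (R (j%:Z + 1))))) n.
  move=> j hj [|m]; rewrite /sadd /sone /st /smul /=.
    by rewrite HR (W_0 hs); case: j hj => // j _; rewrite addr0.
  rewrite HR (W_rec hs) [0 + _]add0r; apply: eq_bigr => i _; rewrite !HR //.
have sym0 : subst_rel (R 0) (R 1) by have := sym 0; rewrite oppr0 add0r.
split; [by split | split; last exact: sym].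
move=> S hS hS0 j n; elim/ltn_ind: n j => n IH.
have pos : forall j, (1 <= j)%N -> S j n = R j n.
  move=> j hj; rewrite hS // rec //.
  have e1 : (j.-1)%:Z = j%:Z - 1 by case: j hj => // j _; rewrite intS addrC addKr.
  have e2 : (j.+1)%:Z = j%:Z + 1 by rewrite intS addrC.
  case: n IH => [|m] IH; rewrite /sadd /sone /st /smul //=.
  congr (_ + _); apply: eq_bigr => i _.
  have hi : (i < m.+1)%N by [].
  have hmi : (m - i < m.+1)%N by rewrite ltnS leq_subr.
  by rewrite !IH // e1 e2.
case=> [|j]; last by apply: pos.
apply: poly_eq_nz => x x0.
by rewrite hS0 // sym0 // pos.
Qed.
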